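(* Let $\mathcal P_X,\mathcal P_Y$ be probability measures on $(E,\mathcal E)$ with $\mathcal P_Y\ll\mathcal P_X$, $L=d\mathcal P_Y/d\mathcal P_X$, and assume $L(\mathbf Z)$ has a continuous distribution under $\mathbf Z\sim\mathcal P_X$. Let $\theta(z)=L(z)/(1+L(z))$. Let $\mathbf Z_X,\mathbf Z_X'\sim\mathcal P_X$ and $\mathbf Z_Y\sim\mathcal P_Y$ be independent, and set $\delta:=\mathbb E|L(\mathbf Z_X)-L(\mathbf Z_X')|$ and $\mu:=\mathbb P(\theta(\mathbf Z_X)<\theta(\mathbf Z_Y))$. Then $\delta=4\mu-2$, i.e. $\mu=\tfrac12+\tfrac{\delta}{4}$.
   Context: $\theta$ is the population conditional probability of label $1$ for a sample drawn with equal weight from $\mathcal P_X$ (label 0) and $\mathcal P_Y$ (label 1); note $\theta/(1-\theta)=L$ and $\theta$ is a strictly increasing function of $L$. *)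

(* Defs.v *)
From HB Require Import structures.
From mathcomp Require Import all_boot all_order all_algebra.
From mathcomp Require Import all_classical all_reals all_analysis.
Set Implicit Arguments. Unset Strict Implicit. Unset Printing Implicit Defensive.
Import Order.TTheory GRing.Theory Num.Theory.
Local Open Scope ring_scope.

Definition theta_of {T} {R : realType} (L : T -> R) (z : T) : R :=
  L z / (1 + L z).

(* Main.v *)
Require Import Defs.
From HB Require Import structures.
From mathcomp Require Import all_boot all_order all_algebra.
From mathcomp Require Import all_classical all_reals all_analysis.
Import Order.TTheory GRing.Theory Num.Theory.
Import numFieldNormedType.Exports.
Local Open Scope classical_set_scope.
Local Open Scope ring_scope.
From mathcomp Require Import lra.

Lemma intD (R : realType) d (T : measurableType d) (m : {measure set T -> \bar R})
  (f g : T -> R) : measurable_fun setT f -> measurable_fun setT g ->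
  (forall x, 0 <= f x) -> (forall x, 0 <= g x) ->
  (\int[m]_x (f x + g x)%:E = \int[m]_x (f x)%:E + \int[m]_x (g x)%:E)%E.
Proof.
move=> mf mg f0 g0.
under eq_integral do rewrite EFinD.
apply: ge0_integralD => //.
- by move=> x _; rewrite lee_fin.
- exact/measurable_realfun.measurable_EFinP.
- by move=> x _; rewrite lee_fin.
- exact/measurable_realfun.measurable_EFinP.
Qed.

Lemma intZ (R : realType) d (T : measurableType d) (m : {measure set T -> \bar R})
  (k : R) (f : T -> R) : 0 <= k -> measurable_fun setT f ->
  (forall x, 0 <= f x) ->
  (\int[m]_x (k * f x)%:E = k%:E * \int[m]_x (f x)%:E)%E.
Proof.
move=> k0 mf f0.
under eq_integral do rewrite EFinM.
apply: ge0_integralZl_EFin => //.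
- by move=> x _; rewrite lee_fin.
- exact/measurable_realfun.measurable_EFinP.
Qed.

Lemma intC (R : realType) d (T : measurableType d) (m : {measure set T -> \bar R})
  (k : R) : (\int[m]_x k%:E = k%:E * m setT)%E.
Proof. by have := integral_cst m measurableT k%:E. Qed.

Lemma intC1 (R : realType) d (T : measurableType d) (m : {measure set T -> \bar R})
  (h : m setT = 1%E) (k : R) : (\int[m]_x k%:E = k%:E)%E.
Proof. by rewrite intC h mule1. Qed.

Lemma theta_lt (R : realType) (a b : R) : 0 <= a -> 0 <= b ->
  (a / (1 + a) < b / (1 + b)) = (a < b).
Proof.
move=> a0 b0.
have a1 : 0 < 1 + a by lra.
have b1 : 0 < 1 + b by lra.
rewrite ltr_pdivrMr // mulrAC ltr_pdivlMr // !mulrDr !mulr1 (mulrC b a).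
by rewrite ltrD2r.
Qed.

Theorem lemma7 (R : realType) (d : measure_display) (E : measurableType d)
  (PX PY : probability E R) (L : E -> R)
  (hac : PY `<< PX)
  (hLmeas : measurable_fun setT L)
  (hLge0 : forall z, 0 <= L z)
  (hL : forall A, measurable A -> PY A = (\int[PX]_(z in A) (L z)%:E)%E)
  (hcont : forall t : R, PX (L @^-1` [set t]) = 0%E) :
  let delta := (\int[(PX \x PX)%E]_(p in setT) (`|L p.1 - L p.2|)%:E)%E in
  let mu := (PX \x PY)%E [set p | theta_of L p.1 < theta_of L p.2] in
  delta = (4%:E * mu - 2%:E)%E.
Proof.
move=> delta mu.
have mL1 : measurable_fun setT (fun p : E * E => L p.1) :=
  measurableT_comp hLmeas measurable_fst.
have mL2 : measurable_fun setT (fun p : E * E => L p.2) :=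
  measurableT_comp hLmeas measurable_snd.
pose S := [set p : E * E | L p.1 < L p.2].
pose Sb := [set p : E * E | L p.2 < L p.1].
pose Sc := ~` (S `|` Sb).
have mS : measurable S.
  have := measurable_lte measurableT
    (proj2 (measurable_realfun.measurable_EFinP _ _) mL1)
    (proj2 (measurable_realfun.measurable_EFinP _ _) mL2).
  by rewrite setTI; under eq_set do rewrite lte_fin.
have mSb : measurable Sb.
  have := measurable_lte measurableT
    (proj2 (measurable_realfun.measurable_EFinP _ _) mL2)
    (proj2 (measurable_realfun.measurable_EFinP _ _) mL1).
  by rewrite setTI; under eq_set do rewrite lte_fin.
have mSc : measurable Sc by apply: measurableC; apply: measurableU.
pose pi := (PX \x PX)%E.
pose fa := fun p : E * E => \1_S p * L p.2.
pose fb := fun p : E * E => \1_Sb p * L p.1.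
pose fc := fun p : E * E => \1_Sc p * L p.1.
have mfa : measurable_fun setT fa by apply: measurable_realfun.measurable_funM => //; exact: measurable_realfun.measurable_indic.
have mfb : measurable_fun setT fb by apply: measurable_realfun.measurable_funM => //; exact: measurable_realfun.measurable_indic.
have mfc : measurable_fun setT fc by apply: measurable_realfun.measurable_funM => //; exact: measurable_realfun.measurable_indic.
have fa0 p : 0 <= fa p by rewrite /fa indicE mulr_ge0.
have fb0 p : 0 <= fb p by rewrite /fb indicE mulr_ge0.
have fc0 p : 0 <= fc p by rewrite /fc indicE mulr_ge0.
have mabs : measurable_fun setT (fun p : E * E => `|L p.1 - L p.2|).
  by apply: measurableT_comp => //; exact: measurable_realfun.measurable_funB.
have pw p : `|L p.1 - L p.2| + L p.1 + L p.2 = 2 * fa p + 2 * fb p + 2 * fc p.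
  rewrite /fa /fb /fc !indicE.
  case: (ltgtP (L p.1) (L p.2)) => h.
  - rewrite (mem_set (h : S p)) (memNset (_ : ~ Sb p)); last by rewrite /Sb/=; lra.
    rewrite (memNset (_ : ~ Sc p)); last by rewrite /Sc/= => /(_ (or_introl h)).
    rewrite ltr0_norm ?subr_lt0 // /=. lra.
  - rewrite (mem_set (h : Sb p)) (memNset (_ : ~ S p)); last by rewrite /S/=; lra.
    rewrite (memNset (_ : ~ Sc p)); last by rewrite /Sc/= => /(_ (or_intror h)).
    rewrite gtr0_norm ?subr_gt0 // /=; lra.
  - rewrite (memNset (_ : ~ S p)); last by rewrite /S/=; lra.
    rewrite (memNset (_ : ~ Sb p)); last by rewrite /Sb/=; lra.
    rewrite (mem_set (_ : Sc p)); last by rewrite /Sc /S /Sb /= => -[] ?; lra.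
    rewrite h subrr normr0 /=; lra.
have hM : measurable_fun setT (fun p : E * E => `|L p.1 - L p.2| + L p.1).
  exact: measurable_realfun.measurable_funD.
have hM2 : measurable_fun setT (fun p : E * E => 2 * fa p + 2 * fb p).
  by apply: measurable_realfun.measurable_funD; apply: measurable_realfun.measurable_funM.
have E1 : (\int[pi]_p (`|L p.1 - L p.2| + L p.1 + L p.2)%:E =
   delta + \int[pi]_p (L p.1)%:E + \int[pi]_p (L p.2)%:E)%E.
  rewrite (@intD _ _ _ pi (fun p => `|L p.1 - L p.2| + L p.1) (fun p => L p.2)) //; last first.
    by move=> p; rewrite addr_ge0.
  rewrite (@intD _ _ _ pi (fun p => `|L p.1 - L p.2|) (fun p => L p.1)) //.
have E2 : (\int[pi]_p (2 * fa p + 2 * fb p + 2 * fc p)%:E =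
   2%:E * \int[pi]_p (fa p)%:E + 2%:E * \int[pi]_p (fb p)%:E
   + 2%:E * \int[pi]_p (fc p)%:E)%E.
  rewrite (@intD _ _ _ pi (fun p => 2 * fa p + 2 * fb p) (fun p => 2 * fc p)) //; last 3 first.
  - by apply: measurable_realfun.measurable_funM.
  - by move=> p; rewrite addr_ge0 // mulr_ge0.
  - by move=> p; rewrite mulr_ge0.
  rewrite (@intD _ _ _ pi (fun p => 2 * fa p) (fun p => 2 * fb p)) //; last 4 first.
  - by apply: measurable_realfun.measurable_funM.
  - by apply: measurable_realfun.measurable_funM.
  - by move=> p; rewrite mulr_ge0.
  - by move=> p; rewrite mulr_ge0.
  by rewrite !intZ.
have Hsum : (delta + \int[pi]_p (L p.1)%:E + \int[pi]_p (L p.2)%:E =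
   2%:E * \int[pi]_p (fa p)%:E + 2%:E * \int[pi]_p (fb p)%:E
   + 2%:E * \int[pi]_p (fc p)%:E)%E.
  by rewrite -E1 -E2; apply: eq_integral => p _; rewrite pw.
have hPX : PX setT = 1%E := probability_setT _.
have hPY : PY setT = 1%E := probability_setT _.
have I1 : (\int[pi]_p (L p.1)%:E = 1%:E)%E.
  rewrite /pi (fubini_tonelli1 (fun p : E * E => (L p.1)%:E)
    (proj2 (measurable_realfun.measurable_EFinP _ _) mL1)); last first.
    by move=> p; rewrite lee_fin.
  rewrite /fubini_F /=.
  under eq_integral do rewrite (@intC1 _ _ _ PX hPX).
  by rewrite -hL // hPY.
have I2 : (\int[pi]_p (L p.2)%:E = 1%:E)%E.
  rewrite /pi (fubini_tonelli1 (fun p : E * E => (L p.2)%:E)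
    (proj2 (measurable_realfun.measurable_EFinP _ _) mL2)); last first.
    by move=> p; rewrite lee_fin.
  rewrite /fubini_F /=.
  under eq_integral do rewrite -hL // hPY.
  by rewrite (@intC1 _ _ _ PX hPX).
have Ic : (\int[pi]_p (fc p)%:E = 0%:E)%E.
  rewrite /pi (fubini_tonelli1 (fun p : E * E => (fc p)%:E)
    (proj2 (measurable_realfun.measurable_EFinP _ _) mfc)); last first.
    by move=> p; rewrite lee_fin.
  rewrite /fubini_F /=.
  apply: integral0_eq => x _.
  have mA : measurable (L @^-1` [set L x]).
    by rewrite -[X in measurable X]setTI; apply: hLmeas => //; exact: measurable_set1.
  rewrite (eq_integral (fun y => (L x * \1_(L @^-1` [set L x]) y)%:E)); last first.
    move=> y _; rewrite /fc !indicE mulrC /=.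
    have -> // : ((x, y) \in Sc) = (y \in L @^-1` [set L x]).
    apply/idP/idP => /set_mem H; apply/mem_set.
    - case: (ltgtP (L x) (L y)) => h //.
      + by exfalso; apply: H; left.
      + by exfalso; apply: H; right.
    - rewrite /Sc /S /Sb /=; move: H; rewrite /preimage /= => ->.
      by case; rewrite ltxx.
  rewrite intZ //.
  - rewrite integral_indic // setIT; transitivity ((L x)%:E * 0)%E; last by rewrite mule0.
    by congr (_ * _)%E; exact: hcont.
have Iab : (\int[pi]_p (fb p)%:E = \int[pi]_p (fa p)%:E)%E.
  rewrite /pi (fubini_tonelli1 (fun p : E * E => (fb p)%:E)
    (proj2 (measurable_realfun.measurable_EFinP _ _) mfb)); last first.
    by move=> p; rewrite lee_fin.
  rewrite (fubini_tonelli2 (fun p : E * E => (fa p)%:E)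
    (proj2 (measurable_realfun.measurable_EFinP _ _) mfa)); last first.
    by move=> p; rewrite lee_fin.
  by rewrite /fubini_F /fubini_G.
have Imu : (mu = \int[pi]_p (fa p)%:E)%E.
  rewrite /mu.
  have -> : [set p : E * E | theta_of L p.1 < theta_of L p.2] = S.
    by apply/seteqP; split => p /=; rewrite /theta_of theta_lt.
  rewrite /pi (fubini_tonelli1 (fun p : E * E => (fa p)%:E)
    (proj2 (measurable_realfun.measurable_EFinP _ _) mfa)); last first.
    by move=> p; rewrite lee_fin.
  rewrite /product_measure1 /fubini_F /=.
  apply: eq_integral => x _ /=.
  rewrite hL; last exact: measurable_xsection.
  rewrite integral_mkcond; apply: eq_integral => y _.
  rewrite patchE /fa indicE mem_xsection.
  by case: ((x, y) \in S) => /=; rewrite ?mul1r ?mul0r.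
have mu0 : (0 <= mu)%E by rewrite Imu; apply: integral_ge0 => p _; rewrite lee_fin.
have d0 : (0 <= delta)%E by apply: integral_ge0 => p _; rewrite lee_fin.
move: Hsum; rewrite I1 I2 Ic Iab -Imu.
clear E1 E2; clearbody delta mu.
have h2 : (2%:E * +oo = +oo :> \bar R)%E.
  by rewrite mulry gtr0_sg ?mul1e // ltr0Sn.
have h4 : (4%:E * +oo = +oo :> \bar R)%E.
  by rewrite mulry gtr0_sg ?mul1e // ltr0Sn.
case: delta d0 => [x|_|//]; case: mu mu0 {Imu} => [y|_|//] //= _.
- move=> _ [h]; congr EFin; lra.
- by move=> H; exfalso; move: H; rewrite h2 mule0 adde0 -!EFinD /=.
- by rewrite h4.
Qed.
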